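(* Define $\psi:\mathbb R^5\to\mathbb R$ by \[ \begin{aligned} \psi(w_0,w_1,w_2,w_3,w_4)&=-\tfrac12w_0^2+\tfrac92(w_3^2+w_4^2)+\sqrt6\,w_0(w_3^2+w_4^2)+\tfrac{3\sqrt6}{2}w_4(w_2^2-w_1^2)\\ &\quad-3\sqrt6\,w_1w_2w_3-\tfrac{\sqrt6}{2}w_0(w_1^2+w_2^2)-\tfrac{\sqrt6}{9}w_0^3. \end{aligned} \] Then for all $(w_0,w_1,w_2,w_3,w_4)\in\mathbb R^5$, \[ \psi(w_0,w_1,w_2,w_3,w_4)\ge\psi\left(w_0,\sqrt{w_1^2+w_2^2},0,0,\sqrt{w_3^2+w_4^2}\right). \] *)

(* Defs.v *)
From Stdlib Require Import Reals Lra.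
Open Scope R_scope.

Definition psi (w0 w1 w2 w3 w4 : R) : R :=
  - (1/2) * w0^2 + (9/2) * (w3^2 + w4^2) + sqrt 6 * w0 * (w3^2 + w4^2)
  + (3 * sqrt 6 / 2) * w4 * (w2^2 - w1^2)
  - 3 * sqrt 6 * w1 * w2 * w3
  - (sqrt 6 / 2) * w0 * (w1^2 + w2^2)
  - (sqrt 6 / 9) * w0^3.

(* Main.v *)
Require Import Defs.
From Stdlib Require Import Reals Lra Psatz.
Open Scope R_scope.

Theorem lemma4p1 (w0 w1 w2 w3 w4 : R) :
  psi w0 w1 w2 w3 w4 >=
  psi w0 (sqrt (w1^2 + w2^2)) 0 0 (sqrt (w3^2 + w4^2)).
Proof.
  set (rr := sqrt (w1^2 + w2^2)).
  set (ss := sqrt (w3^2 + w4^2)).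
  assert (Hr2 : rr^2 = w1^2 + w2^2).
  { unfold rr. rewrite pow2_sqrt; nra. }
  assert (Hs2 : ss^2 = w3^2 + w4^2).
  { unfold ss. rewrite pow2_sqrt; nra. }
  assert (Hr : 0 <= rr) by apply sqrt_pos.
  assert (Hs : 0 <= ss) by apply sqrt_pos.
  assert (H6 : 0 < sqrt 6) by (apply sqrt_lt_R0; lra).
  set (Aw := w4*(w2^2-w1^2) - 2*w1*w2*w3).
  assert (HA2 : Aw^2 <= (ss*rr^2)^2).
  { replace ((ss*rr^2)^2) with ((w3^2+w4^2)*(w1^2+w2^2)^2)
      by (rewrite <- Hr2, <- Hs2; ring).
    unfold Aw.
    assert (0 <= (w4*2*w1*w2 + w3*(w2^2-w1^2))^2) by apply pow2_ge_0.
    assert (Id : (w3^2+w4^2)*(w1^2+w2^2)^2 = Aw^2 + (w4*2*w1*w2 + w3*(w2^2-w1^2))^2)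
      by (unfold Aw; ring).
    lra. }
  assert (HA : Aw + ss*rr^2 >= 0).
  { assert (0 <= ss*rr^2) by (apply Rmult_le_pos; nra).
    destruct (Rle_dec 0 Aw); [lra|].
    nra. }
  assert (Hdiff : psi w0 rr 0 0 ss - psi w0 w1 w2 w3 w4 = -(3*sqrt 6/2)*(Aw+ss*rr^2)).
  { unfold psi, Aw. replace (0^2) with 0 by ring.
    rewrite !Rplus_0_l, !Rplus_0_r, Hs2, Hr2. clearbody rr ss. field. }
  assert (0 <= (3*sqrt 6/2)*(Aw+ss*rr^2)) by (apply Rmult_le_pos; lra).
  lra.
Qed.
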